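(* If $a>b\geq c>d>0$, then $$\frac{L(a,b)}{L(c,d)}>1+\ln\frac{G(a,b)}{G(c,d)}>\frac{2ab}{ab+cd} \qquad\text{and}\qquad \frac{L(a,b)}{L(c,d)}>\frac{\ln\frac{G(a,b)}{G(c,d)}}{\ln\frac{I(a,b)}{I(c,d)}}.$$ In particular, if $a>b>0$, then $$\frac{L(a,b)}{b}>1+\frac{1}{2}\ln\frac{a}{b}>\frac{2a}{a+b}>\frac{\ln\frac{a}{b}}{2\ln\frac{I(a,b)}{b}}.$$
   Context: For $u,v>0$: $G(u,v)=\sqrt{uv}$; the logarithmic mean is $L(u,v)=\frac{u-v}{\ln u-\ln v}$ if $u\neq v$ and $L(u,u)=u$; the identric mean is $I(u,v)=\frac{1}{e}\left(\frac{u^u}{v^v}\right)^{1/(u-v)}$ if $u\neq v$ and $I(u,u)=u$. *)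

(* Defs.v *)
From Stdlib Require Import Reals.
Open Scope R_scope.

Definition Gmean (u v : R) : R := sqrt (u * v).

Definition Lmean (u v : R) : R :=
  if Req_EM_T u v then u else (u - v) / (ln u - ln v).

Definition Imean (u v : R) : R :=
  if Req_EM_T u v then u
  else / exp 1 * Rpower (Rpower u u / Rpower v v) (/ (u - v)).

(* Main.v *)
Require Import Defs.
From Stdlib Require Import Reals Lra.
From Coquelicot Require Import Coquelicot.
Open Scope R_scope.

Lemma pos_from_deriv (f f' : R -> R) (l : R) :
  0 < l -> f 0 = 0 ->
  (forall c, derivable_pt_lim f c (f' c)) ->
  (forall c, 0 < c -> 0 < f' c) -> 0 < f l.
Proof.
  intros Hl H0 Hd Hp.
  destruct (MVT_cor2 f f' 0 l Hl (fun c _ => Hd c)) as [c [Hc [Hc1 Hc2]]].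
  assert (0 < f' c * (l - 0)) by (apply Rmult_lt_0_compat; [apply Hp|]; lra).
  lra.
Qed.

Lemma K1e (l : R) : 0 < l -> exp l - 1 - l - l^2/2 > 0.
Proof.
  intro Hl.
  apply (pos_from_deriv (fun x => exp x - 1 - x - x^2/2) (fun x => exp x - 1 - x)); auto.
  - simpl; rewrite exp_0; field.
  - intro c. apply is_derive_Reals. auto_derive; auto. field.
  - intros c Hc. pose proof (exp_ineq1 c). lra.
Qed.

Lemma K2e (l : R) : 0 < l -> l * (exp l + 1) - 2 * (exp l - 1) > 0.
Proof.
  intro Hl.
  apply (pos_from_deriv (fun x => x * (exp x + 1) - 2 * (exp x - 1)) (fun x => 1 - exp x + x * exp x)); auto.
  - rewrite exp_0; ring.
  - intro c. apply is_derive_Reals. auto_derive; auto. ring.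
  - intros c Hc. pose proof (exp_ineq1 (-c)). rewrite exp_Ropp in H.
    pose proof (exp_pos c).
    assert (exp c * (1 + - c) < exp c * / exp c) by (apply Rmult_lt_compat_l; lra).
    rewrite Rinv_r in H1; lra.
Qed.

Lemma K1 (x : R) : x > 1 -> x - 1 > ln x + (ln x)^2/2.
Proof.
  intro H. assert (0 < ln x) by (rewrite <- ln_1; apply ln_increasing; lra).
  pose proof (K1e _ H0). rewrite exp_ln in H1; lra.
Qed.

Lemma K2 (x : R) : x > 1 -> ln x * (x + 1) > 2 * (x - 1).
Proof.
  intro H. assert (0 < ln x) by (rewrite <- ln_1; apply ln_increasing; lra).
  pose proof (K2e _ H0). rewrite exp_ln in H1; lra.
Qed.

Lemma K3 (x : R) : 0 < x -> ln x <= x - 1.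
Proof.
  intro H. destruct (Req_dec (ln x) 0) as [E|E].
  - rewrite E. assert (x = 1). { rewrite <- (exp_ln x), E, exp_0; auto. } lra.
  - pose proof (exp_ineq1 _ E). rewrite exp_ln in H0; lra.
Qed.

Lemma ln_sqrt' (x : R) : 0 < x -> ln (sqrt x) = ln x / 2.
Proof.
  intro H. assert (0 < sqrt x) by (apply sqrt_lt_R0; auto).
  assert (ln x = ln (sqrt x * sqrt x)) by (rewrite sqrt_sqrt; lra).
  rewrite ln_mult in H1; auto. lra.
Qed.

Lemma L_eq (u v : R) : u > v -> v > 0 -> Lmean u v = (u - v) / (ln u - ln v).
Proof. intros. unfold Lmean. destruct Req_EM_T; [lra | auto]. Qed.

Lemma lnI_eq (u v : R) : u > v -> v > 0 ->
  ln (Imean u v) = (u * ln u - v * ln v) / (u - v) - 1 /\ 0 < Imean u v.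
Proof.
  intros. unfold Imean. destruct Req_EM_T; [lra|].
  unfold Rpower. rewrite <- exp_Ropp, <- exp_plus. split; [|apply exp_pos].
  rewrite ln_exp, ln_div by apply exp_pos. rewrite !ln_exp. field. lra.
Qed.

Lemma lnG_eq (u v w z : R) : u > 0 -> v > 0 -> w > 0 -> z > 0 ->
  ln (Gmean u v / Gmean w z) = (ln u + ln v - ln w - ln z) / 2.
Proof.
  intros. unfold Gmean.
  assert (0 < sqrt (u*v)) by (apply sqrt_lt_R0; nra).
  assert (0 < sqrt (w*z)) by (apply sqrt_lt_R0; nra).
  rewrite ln_div, !ln_sqrt', !ln_mult by nra. field.
Qed.

Lemma lndiff (u v : R) : u > v -> v > 0 -> ln u - ln v = ln (u / v) /\ u / v > 1.
Proof.
  intros. rewrite ln_div by lra. split; auto.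
  apply (Rmult_lt_reg_r v); [lra|]. field_simplify; lra.
Qed.

Theorem theorem3p2 :
  (forall a b c d : R, a > b -> b >= c -> c > d -> d > 0 ->
     Lmean a b / Lmean c d > 1 + ln (Gmean a b / Gmean c d) /\
     1 + ln (Gmean a b / Gmean c d) > 2 * a * b / (a * b + c * d) /\
     Lmean a b / Lmean c d >
       ln (Gmean a b / Gmean c d) / ln (Imean a b / Imean c d)) /\
  (forall a b : R, a > b -> b > 0 ->
     Lmean a b / b > 1 + / 2 * ln (a / b) /\
     1 + / 2 * ln (a / b) > 2 * a / (a + b) /\
     2 * a / (a + b) > ln (a / b) / (2 * ln (Imean a b / b))).
Proof.
split.
- intros a b c d Hab Hbc Hcd Hd.
  rewrite (L_eq a b), (L_eq c d), lnG_eq by lra.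
  destruct (lndiff a b) as [E1 X1]; try lra.
  destruct (lndiff c d) as [E3 X3]; try lra.
  set (l1 := ln a - ln b) in *. set (l3 := ln c - ln d) in *.
  assert (E2 : ln a + ln b - ln c - ln d = l1 + 2 * (ln b - ln c) + l3) by (unfold l1, l3; ring).
  set (l2 := ln b - ln c) in *.
  assert (Hl2 : c * l2 <= b - c).
  { unfold l2. rewrite <- ln_div by lra.
    assert (Hp : 0 < b / c) by (apply Rdiv_lt_0_compat; lra).
    pose proof (K3 _ Hp) as HK.
    assert (Hb : b = c * (b / c)) by (field; lra).
    set (y := b / c) in *. nra. }
  assert (l2 >= 0).
  { destruct (Rle_lt_or_eq_dec c b) as [h|h]; [lra| |].
    - unfold l2. pose proof (ln_increasing c b). lra.
    - unfold l2; rewrite h; lra. }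
  pose proof (K1 _ X1) as K1a. pose proof (K2 _ X1) as K2a.
  pose proof (K1 _ X3) as K1c. pose proof (K2 _ X3) as K2c.
  rewrite <- E1 in K1a, K2a. rewrite <- E3 in K1c, K2c.
  assert (Ha : a = b * (a / b)) by (field; lra).
  assert (Hc : c = d * (c / d)) by (field; lra).
  set (x1 := a / b) in *. set (x3 := c / d) in *.
  assert (l1 > 0) by nra. assert (l3 > 0) by nra.
  assert (F1 : a - b > b * l1 + b * l1^2/2) by (rewrite Ha; nra).
  assert (F3 : (c + d) * l3 > 2 * (c - d)) by (rewrite Hc; nra).
  assert (F3' : c - d > d * l3 + d * l3^2/2) by (rewrite Hc; nra).
  assert (F2 : (a + b) * l1 > 2 * (a - b)) by (rewrite Ha; nra).
  set (L := (a - b) / l1). set (M := (c - d) / l3).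
  assert (HL : L * l1 = a - b) by (unfold L; field; lra).
  assert (HM : M * l3 = c - d) by (unfold M; field; lra).
  assert (Mpos : M > 0) by (unfold M; apply Rdiv_lt_0_compat; lra).
  assert (Mc : M <= c) by nra.
  assert (T1 : L - b > b * l1 / 2) by nra.
  assert (T3 : c >= M + M * l3 / 2) by nra.
  assert (I1 : L / M > 1 + (l1 + 2 * l2 + l3) / 2).
  { apply (Rmult_lt_reg_r M); auto.
    replace (L / M * M) with L by (field; lra). nra. }
  rewrite E2. split; [exact I1|]. split.
  +
    set (s := a * b / (c * d)).
    assert (Hs : s > 1).
    { unfold s. apply (Rmult_lt_reg_r (c*d)); [nra|]. field_simplify; nra. }
    assert (Ls : ln s = l1 + 2 * l2 + l3).
    { unfold s. rewrite ln_div, !ln_mult by nra. unfold l1, l2, l3. ring. }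
    pose proof (K2 _ Hs) as K2s. rewrite Ls in K2s.
    assert (Es : 2 * a * b / (a * b + c * d) = 2 * s / (s + 1)).
    { unfold s. field. split; nra. }
    rewrite Es. apply (Rmult_lt_reg_r (s+1)); [lra|].
    replace (2 * s / (s + 1) * (s + 1)) with (2 * s) by (field; lra). nra.
  +
    destruct (lnI_eq a b) as [Ia Ipa]; try lra.
    destruct (lnI_eq c d) as [Ic Ipc]; try lra.
    rewrite ln_div, Ia, Ic by auto.
    set (h1 := a * l1 / (a - b) - 1). set (h3 := 1 - d * l3 / (c - d)).
    assert (Eli : (a * ln a - b * ln b) / (a - b) - 1 - ((c * ln c - d * ln d) / (c - d) - 1)
                  = h1 + l2 + h3).
    { unfold h1, h3, l1, l2, l3. field. lra. }
    rewrite Eli.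
    assert (Hh1 : h1 > l1 / 2).
    { unfold h1. apply (Rplus_lt_reg_r 1). apply (Rmult_lt_reg_r (a - b)); [lra|].
      replace ((a * l1 / (a - b) - 1 + 1) * (a - b)) with (a * l1) by (field; lra). nra. }
    assert (Hh3 : h3 * (1 + l3 / 2) >= l3 / 2).
    { unfold h3. replace ((1 - d * l3 / (c - d)) * (1 + l3 / 2)) with
        ((c - d - d * l3) * (2 + l3) / (2 * (c - d))) by (field; lra).
      apply Rle_ge. apply (Rmult_le_reg_r (2 * (c - d))); [lra|].
      replace ((c - d - d * l3) * (2 + l3) / (2 * (c - d)) * (2 * (c - d)))
        with ((c - d - d * l3) * (2 + l3)) by (field; lra). nra. }
    assert (Hh3p : h3 >= 0) by nra.
    set (li := h1 + l2 + h3). set (g := (l1 + 2 * l2 + l3) / 2).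
    assert (lip : li > 0) by (unfold li; lra).
    assert (Key : li * (1 + g) >= g) by (unfold li, g; nra).
    apply Rle_lt_trans with (1 + g); [|exact I1].
    apply (Rmult_le_reg_r li); auto.
    replace (g / li * li) with g by (field; lra). lra.
- intros a b Hab Hb.
  rewrite (L_eq a b) by lra.
  destruct (lndiff a b) as [E1 X1]; try lra.
  pose proof (K1 _ X1) as K1a. pose proof (K2 _ X1) as K2a.
  destruct (lnI_eq a b) as [Ia Ipa]; try lra.
  rewrite (ln_div (Imean a b) b), Ia by auto.
  assert (Ha : a = b * (a / b)) by (field; lra).
  set (x := a / b) in *. rewrite <- E1 in K1a, K2a |- *.
  set (l := ln a - ln b) in *.
  assert (l > 0) by nra.
  assert (F1 : a - b > b * l + b * l^2/2) by (rewrite Ha; nra).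
  assert (F2 : (a + b) * l > 2 * (a - b)) by (rewrite Ha; nra).
  split; [|split].
  + apply (Rmult_lt_reg_r (b * l)); [nra|].
    replace ((a - b) / l / b * (b * l)) with (a - b) by (field; lra). nra.
  + apply (Rmult_lt_reg_r (a + b)); [nra|].
    replace (2 * a / (a + b) * (a + b)) with (2 * a) by (field; lra). nra.
  + replace ((a * ln a - b * ln b) / (a - b) - 1 - ln b) with ((a * l - (a - b)) / (a - b))
      by (unfold l; field; lra).
    assert (Hk : a * l - (a - b) > 0) by nra.
    replace (l / (2 * ((a * l - (a - b)) / (a - b)))) with (l * (a - b) / (2 * (a * l - (a - b))))
      by (field; lra).
    apply (Rmult_lt_reg_r (2 * (a * l - (a - b)) * (a + b))); [nra|].
    replace (l * (a - b) / (2 * (a * l - (a - b))) * (2 * (a * l - (a - b)) * (a + b)))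
      with (l * (a - b) * (a + b)) by (field; lra).
    replace (2 * a / (a + b) * (2 * (a * l - (a - b)) * (a + b)))
      with (4 * a * (a * l - (a - b))) by (field; lra).
    assert (l * (3 * a^2 + b^2) > 4 * a * (a - b)).
    { assert ((a - b)^2 * l >= 0) by nra. nra. }
    nra.
Qed.
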